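(* Let $h(\eta)$ be a radially homogeneous polynomial of degree $l$ on $T_p^*Y$, written as $h(\eta)=\sum_{j=0}^{l'}\eta_0^j h_j(\eta')$ with $h_j$ a homogeneous polynomial of degree $l-j$ and $h_{l'}\neq0$, where $l'\leq l$. Then for every integer $k$, $h(\eta)|\eta|^{-k}$ lifts to define an element of $S^{\,l-k,\;l'+l-2k,\;l'+l-2k}_{eH}$, and, as parabolically homogeneous functions on the half spaces $\pm\eta_0>0$, its Heisenberg principal symbols are $$(\pm1)^{l'}\,|\eta_0|^{l'-k}\,h_{l'}(\eta').$$
   Context: $Y$ is a co-oriented contact manifold of dimension $2n-1$ and $p\in Y$; Darboux coordinates centered at $p$ give linear coordinates $\eta=(\eta_0,\eta')$, $\eta'\in\mathbb{R}^{2(n-1)}$, on $T_p^*Y$, with the contact line $L_p=\{\eta'=0\}$. The radial compactification of $T_p^*Y$ adds a sphere at infinity with defining function $r_R=1/|\eta|$. The extended Heisenberg compactification is obtained from the radial one by parabolically blowing up (with parabolic direction the conormal to the boundary) the two boundary points of the closure of $L_p$; it has three boundary hypersurfaces: the classical face with defining function $r_c$ and the upper and lower Heisenberg faces (over $\eta_0\to+\infty$, resp. $-\infty$) with defining functions $r_{e+},r_{e-}$; in the interior of the Heisenberg faces $|\eta_0|^{-1/2}$ is a defining function. Extended Heisenberg symbols: $S^{m_c,m_+,m_-}_{eH}=r_c^{-m_c}r_{e+}^{-m_+}r_{e-}^{-m_-}C^\infty$ of the extended Heisenberg compactification. The Heisenberg principal symbols of such a symbol, of Heisenberg orders $m_\pm$,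 are the leading terms at the upper/lower Heisenberg faces, represented by functions on the half spaces $\pm\eta_0>0$ homogeneous of degree $m_\pm$ with respect to the parabolic dilation $(\eta_0,\eta')\mapsto(\lambda^2\eta_0,\lambda\eta')$. ''Lifts'' means the pullback to the extended Heisenberg compactification. *)

(* Defs.v *)
From HB Require Import structures.
From mathcomp Require Import all_boot all_order all_algebra.
From mathcomp Require Import all_classical all_reals all_analysis.
Set Implicit Arguments. Unset Strict Implicit. Unset Printing Implicit Defensive.
Import Order.TTheory GRing.Theory Num.Theory.
Import numFieldNormedType.Exports.
Local Open Scope classical_set_scope.
Local Open Scope ring_scope.

(* Coordinates on T_p^*Y = R^{2n-1}: eta = (eta0, eta') with eta0 : R and
   eta' : 'rV[R]_d, d = 2(n-1).  All chart coordinates are likewise taken in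
   R * 'rV[R]_d (a space of the same dimension 2n-1). *)

Section Defs.
Variable R : realType.

Fixpoint iterD (V : normedModType R) (vs : seq V) (g : V -> R) : V -> R :=
  if vs is v :: vs' then 'D_v (iterD vs' g) else g.

Definition smooth_on (V : normedModType R) (U : set V) (g : V -> R) : Prop :=
  open U /\
  forall vs : seq V,
    (forall x, U x -> {for x, continuous (iterD vs g)}) /\
    (forall v x, U x -> derivable (iterD vs g) x v).

Variable d : nat.
Notation P := (R * 'rV[R]_d)%type.

(* F, defined (meaningfully) on the part Pos of the chart domain D lying over
   the interior, extends smoothly up to the boundary of D (D may contain
   boundary points, i.e. zeros of the boundary coordinates). *)
Definition chart_smooth (D Pos : set P) (F : P -> R) : Prop :=
  exists U : set P, D `<=` U /\
    exists G : P -> R, smooth_on U G /\ forall p, D p -> Pos p -> G p = F p.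

Definition sgn (b : bool) : R := (-1) ^+ b.

Definition setj (u : 'rV[R]_d) (j : 'I_d) (c : R) : 'rV[R]_d :=
  \row_k (if k == j then c else u ord0 k).

Definition eucl (e0 : R) (e' : 'rV[R]_d) : R :=
  Num.sqrt (e0 ^+ 2 + \sum_(i < d) e' ord0 i ^+ 2).

(* Membership in S^{mc, mp, mm}_{eH}: a = r_c^{-mc} r_{e+}^{-mp} r_{e-}^{-mm}
   times a function smooth on the extended Heisenberg compactification,
   written in an explicit atlas of that compactification:
   - interior chart: eta itself;
   - radial-compactification charts away from the closure of L_p
     (classical face x = 0), for eta'_j dominant with sign s:
        eta0 = s u_j / x, eta'_j = s / x, eta'_k = s u_k / x (k <> j);
   - Heisenberg charts (interior of the face rho = 0 = |eta0|^{-1/2}), sign e: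
        eta0 = e / rho^2, eta' = w / rho;
   - corner charts (Heisenberg face t = 0, classical face z = u_j = 0),
     sign e of eta0, index j, sign s of eta'_j:
        eta0 = e / (z t^2), eta'_j = s / (z t), eta'_k = s u_k/(z t).
   In the corner charts r_c ~ z and r_e ~ t; in Heisenberg charts r_e ~ rho;
   in radial charts r_c ~ x (lifts of radial r_R = 1/|eta| are r_c r_e^2). *)
Definition eH_symbol (mc mp mm : int) (a : R -> 'rV[R]_d -> R) : Prop :=
  let me (e : bool) := if e then mm else mp in
  smooth_on setT (fun p : P => a p.1 p.2)
  /\ (forall (j : 'I_d) (s : bool),
       chart_smooth
         [set p : P | 0 <= p.1 < 1 /\ forall k, `|p.2 ord0 k| < 2]
         [set p : P | 0 < p.1]
         (fun p => p.1 ^ mc *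
            a (sgn s * p.2 ord0 j / p.1) ((sgn s / p.1) *: setj p.2 j 1)))
  /\ (forall e : bool,
       chart_smooth
         [set p : P | 0 <= p.1 < 1 /\ forall k, `|p.2 ord0 k| < 2]
         [set p : P | 0 < p.1]
         (fun p => p.1 ^ (me e) * a (sgn e / p.1 ^+ 2) (p.1^-1 *: p.2)))
  /\ (forall (e : bool) (j : 'I_d) (s : bool),
       chart_smooth
         [set p : P | 0 <= p.1 < 2 /\ 0 <= p.2 ord0 j < 1 /\
                      forall k, k != j -> `|p.2 ord0 k| < 2]
         [set p : P | 0 < p.1 /\ 0 < p.2 ord0 j]
         (fun p => (p.2 ord0 j) ^ mc * p.1 ^ (me e) *
            a (sgn e / (p.2 ord0 j * p.1 ^+ 2))
              ((sgn s / (p.2 ord0 j * p.1)) *: setj p.2 j 1))).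

(* Heisenberg principal symbol of Heisenberg order m at the upper (e = false)
   resp. lower (e = true) Heisenberg face, represented as a parabolically
   homogeneous function sigma on the half space sgn e * eta0 > 0: it is the
   boundary value of r_e^m a, i.e.
   lim_{lam -> +oo} lam^{-m} a(lam^2 eta0, lam eta') = sigma(eta0, eta'). *)
Definition heis_psym (e : bool) (m : int) (a : R -> 'rV[R]_d -> R)
    (sigma : R -> 'rV[R]_d -> R) : Prop :=
  forall (e0 : R) (e' : 'rV[R]_d), 0 < sgn e * e0 ->
    (fun lam : R => lam ^ (- m) * a (lam ^+ 2 * e0) (lam *: e'))
      @ +oo --> sigma e0 e'.

Definition hom_poly (deg : nat) (g : 'rV[R]_d -> R) : Prop :=
  exists c : {ffun 'I_d -> 'I_deg.+1} -> R,
    forall x, g x = \sum_(al : {ffun 'I_d -> 'I_deg.+1} |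
                          (\sum_(i < d) (al i : nat) == deg)%N)
                      c al * \prod_(i < d) x ord0 i ^+ al i.

End Defs.

(* Main.v *)
Require Import Defs.
From HB Require Import structures.
From mathcomp Require Import all_boot all_order all_algebra.
From mathcomp Require Import all_classical all_reals all_analysis.
From mathcomp Require Import ring lra.
Set Implicit Arguments. Unset Strict Implicit. Unset Printing Implicit Defensive.
Import Order.TTheory GRing.Theory Num.Theory.
Import numFieldNormedType.Exports.
Local Open Scope classical_set_scope.
Local Open Scope ring_scope.

Section Sm.
Variable R : realType.
Variable V : normedModType R.

Fixpoint Sm (n : nat) (U : set V) (f : V -> R) : Prop :=
  (forall x, U x -> {for x, continuous f}) /\
  (if n is n'.+1 then (forall x v, U x -> derivable f x v) /\
                      forall v, Sm n' U ('D_v f) else True).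

Lemma Sm_cont n U f x : Sm n U f -> U x -> {for x, continuous f}.
Proof. by case: n => [[]|n []] => H _ /H. Qed.

Lemma SmS n U f : Sm n.+1 U f -> Sm n U f.
Proof.
elim: n f => [|n IH] f [c [d D]]; first by split.
by split => //; split => // v; apply: IH.
Qed.

Lemma Sm_iterD U (vs : seq V) : forall n f, Sm (n + size vs) U f -> Sm n U (Defs.iterD vs f).
Proof.
elim: vs => [|v vs IH] n f /=; first by rewrite addn0.
rewrite -addSnnS => /IH [_ [_]]; exact.
Qed.

Lemma Sm_smooth U f : open U -> (forall n, Sm n U f) -> smooth_on U f.
Proof.
move=> oU H; split => // vs.
have [c [d _]] := Sm_iterD (H (1 + size vs))%N.
by split => // v x Ux; apply: d.
Qed.

Lemma Sm_local n U f g : open U -> (forall x, U x -> f x = g x) ->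
  Sm n U f -> Sm n U g.
Proof.
move=> oU; elim: n f g => [|n IH] f g fg [c H].
- split => // x Ux.
  have nx : \forall y \near x, f y = g y.
    by apply: filterS (open_nbhs_nbhs (conj oU Ux)) => y /fg.
  have := c x Ux; rewrite /prop_for /continuous_at (fg x Ux) => cf; rewrite /prop_for /continuous_at.
  apply: cvg_trans cf.
  by apply: near_eq_cvg; apply: filterS nx => y ->.
- have nx x : U x -> \forall y \near x, f y = g y.
    by move=> Ux; apply: filterS (open_nbhs_nbhs (conj oU Ux)) => y /fg.
  case: H => d D; split; [|split].
  + move=> x Ux; have nxx := nx x Ux.
    have := c x Ux; rewrite /prop_for /continuous_at (fg x Ux) => cf; rewrite /prop_for /continuous_at.
    apply: cvg_trans cf.
    by apply: near_eq_cvg; apply: filterS nxx => y ->.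
  + move=> x v Ux; apply: near_eq_derivable (d x v Ux).
    by apply: filterS (nx x Ux) => y ->.
  + move=> v; apply: IH (D v) => x Ux.
    exact: near_eq_derive (nx x Ux).
Qed.

Lemma Sm_cst n U (c : R) : Sm n U (fun _ => c).
Proof.
elim: n c => [|n IH] c; first by split => // x _; exact: cvg_cst.
split; first by move=> x _; exact: cvg_cst.
split; first by move=> x v _; exact: derivable_cst.
move=> v; have -> : 'D_v (fun _ : V => c) = (fun _ => 0).
  by apply: funext => x; exact: derive_cst.
by [].
Qed.

Lemma Sm_add n U f g : open U -> Sm n U f -> Sm n U g -> Sm n U (f + g).
Proof.
move=> oU; elim: n f g => [|n IH] f g [cf Hf] [cg Hg].
  by split => // x Ux; apply: cvgD; [exact: cf|exact: cg].
case: Hf => df Df; case: Hg => dg Dg.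
split; first by move=> x Ux; apply: cvgD; [exact: cf|exact: cg].
split; first by move=> x v Ux; apply: derivableD; [exact: df|exact: dg].
move=> v; apply: (Sm_local (f := 'D_v f + 'D_v g)) => //.
  by move=> x Ux /=; rewrite deriveD //; [exact: df|exact: dg].
by apply: IH; [exact: Df|exact: Dg].
Qed.

Lemma Sm_mul n U f g : open U -> Sm n U f -> Sm n U g -> Sm n U (f * g).
Proof.
move=> oU; elim: n f g => [|n IH] f g [cf Hf] [cg Hg].
  by split => // x Ux; apply: cvgM; [exact: cf|exact: cg].
case: Hf => df Df; case: Hg => dg Dg.
split; first by move=> x Ux; apply: cvgM; [exact: cf|exact: cg].
split; first by move=> x v Ux; apply: derivableM; [exact: df|exact: dg].
move=> v; apply: (Sm_local (f := f * 'D_v g + g * 'D_v f)) => //.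
  by move=> x Ux /=; rewrite deriveM //; [exact: df|exact: dg].
have Sf : Sm n U f by apply: SmS; split => //; split.
have Sg : Sm n U g by apply: SmS; split => //; split.
by apply: Sm_add => //; [exact: IH Sf (Dg v)|exact: IH Sg (Df v)].
Qed.

End Sm.

Section Chain.
Variable R : realType.
Variable V : normedModType R.

Lemma derive_1d (f : V -> R) x v :
  'D_v f x = 'D_1 (fun h : R => f (h *: v + x)) 0.
Proof.
rewrite /derive.
set g := fun h : R => f (h *: v + x).
have -> // : (fun h : R => h^-1 *: ((f \o shift x) (h *: v) - f x)) =
   (fun h : R => h^-1 *: ((g \o shift 0) (h *: 1) - g 0)).
apply: funext => h; rewrite /g /=.
by rewrite addr0 scale0r add0r [_%:A]mulr1.
Qed.

Lemma chain_dir (b : V -> R) (g : R -> R) x v :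
  derivable b x v -> derivable g (b x) 1 ->
  derivable (g \o b) x v /\ 'D_v (g \o b) x = 'D_1 g (b x) * 'D_v b x.
Proof.
move=> db dg.
pose phi := fun h : R => b (h *: v + x).
have dphi : derivable phi 0 1 by exact: (derivable1P b x v).1 db.
have phi0 : phi 0 = b x by rewrite /phi scale0r add0r.
have dg' : derivable g (phi 0) 1 by rewrite phi0.
split.
  apply/(derivable1P (g \o b) x v); apply/derivable1_diffP.
  apply: (@differentiable_comp _ _ _ _ phi g).
    exact/derivable1_diffP.
  exact/derivable1_diffP.
rewrite derive_1d (derive_1d b).
have -> : (fun h : R => (g \o b) (h *: v + x)) = g \o phi by [].
rewrite -!derive1E derive1_comp // phi0.
by rewrite derive1E.
Qed.

Lemma dirR (f : R -> R) x v : derivable f x 1 ->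
  derivable f x v /\ 'D_v f x = v * 'D_1 f x.
Proof.
move=> /derivable1_diffP df; split; first exact: diff_derivable.
by rewrite deriveE // diff1E // derive1E.
Qed.

Lemma lin_derive (f : V -> R) x v :
  (forall a y z, f (a *: y + z) = a * f y + f z) ->
  derivable f x v /\ 'D_v f x = f v.
Proof.
move=> Hf.
have HL : (fun h : R => h^-1 *: ((f \o shift x) (h *: v) - f x)) @ 0^' --> f v.
  apply: cvg_trans (cvg_cst (f v)).
  apply: near_eq_cvg; rewrite near_withinE; apply: nearW => h /= hn0.
  rewrite Hf addrK -[X in _ = X]/(h^-1 * (h * f v)).
  by rewrite mulrA mulVf // mul1r.
  exact: dnbhs_filter.
split; first by apply: cvgP HL.
exact: cvg_lim HL.
Qed.

End Chain.

Section SmMore.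
Variable R : realType.
Variable V : normedModType R.
Implicit Types (U : set V) (f g : V -> R).

Lemma Sm_addf n U f g : open U -> Sm n U f -> Sm n U g -> Sm n U (fun x => f x + g x).
Proof. exact: Sm_add. Qed.

Lemma Sm_mulf n U f g : open U -> Sm n U f -> Sm n U g -> Sm n U (fun x => f x * g x).
Proof. exact: Sm_mul. Qed.

Lemma Sm_scal n U (c : R) f : open U -> Sm n U f -> Sm n U (fun x => c * f x).
Proof. by move=> oU Sf; apply: Sm_mulf => //; exact: Sm_cst. Qed.

Lemma Sm_sum n U (I : Type) (r : seq I) (P : pred I) (F : I -> V -> R) :
  open U -> (forall i, P i -> Sm n U (F i)) ->
  Sm n U (fun x => \sum_(i <- r | P i) F i x).
Proof.
move=> oU HF; elim: r => [|i r IH].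
  have -> : (fun x => \sum_(i <- [::] | P i) F i x) = (fun _ => 0).
    by apply: funext => x; rewrite big_nil.
  exact: Sm_cst.
have -> : (fun x => \sum_(j <- i :: r | P j) F j x) =
   (fun x => (if P i then F i x else 0) + \sum_(j <- r | P j) F j x).
  by apply: funext => x; rewrite big_cons; case: (P i); rewrite ?add0r.
apply: Sm_addf => //; case Pi: (P i); [exact: HF|exact: Sm_cst].
Qed.

Lemma Sm_prod n U (I : Type) (r : seq I) (P : pred I) (F : I -> V -> R) :
  open U -> (forall i, P i -> Sm n U (F i)) ->
  Sm n U (fun x => \prod_(i <- r | P i) F i x).
Proof.
move=> oU HF; elim: r => [|i r IH].
  have -> : (fun x => \prod_(i <- [::] | P i) F i x) = (fun _ => 1).
    by apply: funext => x; rewrite big_nil.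
  exact: Sm_cst.
have -> : (fun x => \prod_(j <- i :: r | P j) F j x) =
   (fun x => (if P i then F i x else 1) * \prod_(j <- r | P j) F j x).
  by apply: funext => x; rewrite big_cons; case: (P i); rewrite ?mul1r.
apply: Sm_mulf => //; case Pi: (P i); [exact: HF|exact: Sm_cst].
Qed.

Lemma Sm_expf n U f m : open U -> Sm n U f -> Sm n U (fun x => f x ^+ m).
Proof.
move=> oU Sf; elim: m => [|m IH].
  have -> : (fun x => f x ^+ 0) = (fun _ => 1) by apply: funext => x; rewrite expr0.
  exact: Sm_cst.
have -> : (fun x => f x ^+ m.+1) = (fun x => f x * f x ^+ m).
  by apply: funext => x; rewrite exprS.
exact: Sm_mulf.
Qed.

Lemma Sm_comp n (W : set R) U (g : R -> R) b : open W -> open U ->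
  Sm n W g -> Sm n U b -> (forall x, U x -> W (b x)) -> Sm n U (g \o b).
Proof.
move=> oW oU; elim: n g b => [|n IH] g b [cg Hg] [cb Hb] UW.
  split => // x Ux; apply: continuous_comp; [exact: cb|exact: cg (UW x Ux)].
case: Hg => dg Dg; case: Hb => db Db.
split.
  move=> x Ux; apply: continuous_comp; [exact: cb|exact: cg (UW x Ux)].
split.
  by move=> x v Ux; exact: (chain_dir (db x v Ux) (dg (b x) 1 (UW x Ux))).1.
move=> v; apply: (Sm_local (f := fun x => ('D_1 g \o b) x * 'D_v b x)) => //.
  by move=> x Ux; rewrite (chain_dir (db x v Ux) (dg (b x) 1 (UW x Ux))).2.
apply: Sm_mulf => //; last exact: Db.
apply: IH => //; first exact: Dg.
by apply: SmS; split => //; split.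
Qed.

Lemma Sm_lin n U f : open U -> continuous f ->
  (forall a y z, f (a *: y + z) = a * f y + f z) -> Sm n U f.
Proof.
move=> oU cf Hf; case: n => [|n]; first by split => // x _; exact: cf.
split; first by move=> x _; exact: cf.
split; first by move=> x v _; exact: (lin_derive x v Hf).1.
move=> v; apply: (Sm_local (f := fun _ => f v)) => //.
  by move=> x _; rewrite (lin_derive x v Hf).2.
exact: Sm_cst.
Qed.

End SmMore.

Section Flat.
Variable R : realType.

Definition Wpos : set R := [set y | 0 < y].

Lemma open_Wpos : open Wpos.
Proof. exact: open_gt. Qed.

Lemma Sm_powR n (r : R) : Sm n Wpos (fun y => y `^ r).
Proof.
elim: n r => [|n IH] r.
  split => // x x0; apply/differentiable_continuous/derivable1_diffP.
  exact: (is_derive1_powR r x0).(ex_derive).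
split.
  move=> x x0; apply/differentiable_continuous/derivable1_diffP.
  exact: (is_derive1_powR r x0).(ex_derive).
split.
  by move=> x v x0; exact: (dirR v (is_derive1_powR r x0).(ex_derive)).1.
move=> v; apply: (Sm_local (f := fun y => v * (r * y `^ (r - 1)))).
- exact: open_Wpos.
- move=> x x0; rewrite (dirR v (is_derive1_powR r x0).(ex_derive)).2.
  by rewrite (is_derive1_powR r x0).(derive_val).
- apply: Sm_scal; first exact: open_Wpos.
  apply: Sm_scal; first exact: open_Wpos.
  exact: IH.
Qed.

Lemma poly_exp_bound (q : {poly R}) : exists C : R, 0 <= C /\
  forall y, 1 <= y -> `|q.[y]| * expR (- y) <= C / y.
Proof.
set m := size q.
set S := \sum_(i < m) `|q`_i|.
have S0 : 0 <= S by apply: sumr_ge0 => i _.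
exists (S * (m.+1)`!%:R); split; first by apply: mulr_ge0.
move=> y y1.
have y0 : 0 < y by lra.
have H1 : `|q.[y]| <= S * y ^+ m.
  rewrite horner_coef /S mulr_suml.
  apply: le_trans (ler_norm_sum _ _ _) _.
  apply: ler_sum => i _; rewrite normrM normrX (ger0_norm (ltW y0)).
  apply: ler_wpM2l => //; apply: ler_weXn2l => //.
  exact: ltnW (ltn_ord i).
have H2 : y ^+ m.+1 / (m.+1)`!%:R <= expR y.
  apply: le_trans (expR_ge1Dxn m (ltW y0)); lra.
have fpos : 0 < (m.+1)`!%:R :> R by rewrite ltr0n fact_gt0.
have ym0 : 0 < y ^+ m.+1 by exact: exprn_gt0.
have H3 : expR (- y) <= (m.+1)`!%:R / y ^+ m.+1.
  rewrite expRN -[X in _ <= X]invf_div.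
  rewrite lef_pV2 ?posrE ?expR_gt0 ?divr_gt0 //.
apply: le_trans (ler_pM (normr_ge0 _) (expR_ge0 _) H1 H3) _.
rewrite exprS.
have yn0 : y != 0 by rewrite gt_eqF.
have ymn0 : y ^+ m != 0 by rewrite expf_neq0.
suff -> : S * y ^+ m * ((m.+1)`!%:R / (y * y ^+ m)) = S * (m.+1)`!%:R / y by [].
by field; rewrite ymn0 yn0.
Qed.

Definition Fp (p : {poly R}) (x : R) : R :=
  if 0 < x then p.[x^-1] * expR (- x^-1) else 0.

Definition dq (p : {poly R}) : {poly R} := 'X^2 * (p - p^`()).


Lemma Fp0 p : Fp p 0 = 0.
Proof. by rewrite /Fp ltxx. Qed.

Lemma Fp_deriv0 p : derivable (Fp p) 0 1 /\ 'D_1 (Fp p) 0 = 0.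
Proof.
have [C [C0 HC]] := poly_exp_bound ('X * p).
have E : (fun h : R => h^-1 *: ((Fp p \o shift 0) (h *: 1) - Fp p 0)) =
         (fun h => h^-1 * Fp p h).
  by apply: funext => h /=; rewrite Fp0 subr0 addr0 [_%:A]mulr1.
have L : (fun h => h^-1 * Fp p h) @ 0^' --> 0.
  apply/cvgr0Pnorm_lt => e e0.
  have eC : 0 < e / (C + 1) by apply: divr_gt0 => //; lra.
  rewrite near_withinE.
  near=> h => hn0.
  have h1 : `|h| < 1.
    by near: h; exact: (@cvgr0_norm_lt _ _ _ (nbhs (0:R)) _ id cvg_id _ ltr01).
  have h2 : `|h| < e / (C + 1).
    by near: h; exact: (@cvgr0_norm_lt _ _ _ (nbhs (0:R)) _ id cvg_id _ eC).
  rewrite /Fp; case: ifPn => h0; last by rewrite mulr0 normr0.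
  have hy : 1 <= h^-1.
    by rewrite -[X in X <= _]invr1 lef_pV2 ?posrE //; move: h1; rewrite gtr0_norm //; lra.
  have := HC _ hy; rewrite hornerM hornerX invrK.
  move=> H; rewrite mulrA normrM (gtr0_norm (expR_gt0 _)).
  apply: le_lt_trans H _.
  rewrite gtr0_norm // in h2.
  have : C * h <= (C + 1) * h by rewrite mulrDl mul1r; lra.
  have : (C + 1) * h < (C + 1) * (e / (C + 1)) by rewrite ltr_pM2l //; lra.
  rewrite mulrCA divff ?mulr1; last by apply/negP => /eqP; lra.
  lra.
have dF : derivable (Fp p) 0 1 by rewrite /derivable E; exact: cvgP L.
split => //; rewrite /derive E; exact: cvg_lim L.
Unshelve. all: by end_near.
Qed.


Lemma Fp_deriv_pos p x : 0 < x ->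
  derivable (Fp p) x 1 /\ 'D_1 (Fp p) x = Fp (dq p) x.
Proof.
move=> x0; have xn0 : x != 0 by rewrite gt_eqF.
pose G := fun y : R => p.[y^-1] * expR (- y^-1).
have nG : \forall y \near x, G y = Fp p y.
  by near=> y; rewrite /Fp ifT //; near: y; exact: lt_nbhsr.
have dinv : derivable (fun y : R => y^-1) x 1.
  have := (@derivableV _ _ id x 1 xn0 (@derivable_id _ _ x 1)).
  done.
have Dinv : 'D_1 (fun y : R => y^-1) x = - x ^- 2.
  rewrite (@deriveV _ _ id x 1 xn0 (@derivable_id _ _ x 1)) derive_id.
  by rewrite [_ *: _]mulr1.
have [dH1 DH1] := chain_dir dinv (@derivable_horner _ p (x^-1)).
have dB : derivable (fun y : R => - y^-1) x 1.
  by have := derivableN dinv.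
have DB : 'D_1 (fun y : R => - y^-1) x = x ^- 2.
  by have := deriveN dinv; rewrite Dinv opprK.
have [dH2 DH2] := chain_dir dB (@derivable_expR _ (- x^-1)).
have dG : derivable G x 1 by have := derivableM dH1 dH2.
have DG := deriveM dH1 dH2.
split; first exact: near_eq_derivable nG dG.
rewrite -(@near_eq_derive _ _ _ G (Fp p) x 1 nG).
have -> : 'D_1 G x = 'D_1 ((horner p \o (fun y : R => y^-1)) * (expR \o (fun y : R => - y^-1))) x by [].
rewrite DG DH1 DH2 Dinv DB (is_derive_poly p (x^-1)).(derive_val).
have -> : 'D_1 expR (- x^-1) = expR (- x^-1).
  by have := congr1 (fun g => g (- x^-1)) (derive_expR R).
rewrite /Fp ifT // /dq hornerM hornerXn hornerD hornerN /=.
rewrite /GRing.scale /=.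
field.
done.
Unshelve. all: by end_near.
Qed.


Lemma Fp_deriv_neg p x : x < 0 ->
  derivable (Fp p) x 1 /\ 'D_1 (Fp p) x = Fp (dq p) x.
Proof.
move=> x0.
have nG : \forall y \near x, (fun _ : R => (0:R)) y = Fp p y.
  near=> y; rewrite /Fp ifF //; apply/negbTE; rewrite -leNgt ltW //.
  by near: y; exact: lt_nbhsl.
split; first exact: near_eq_derivable nG (derivable_cst _ _ _).
rewrite -(@near_eq_derive _ _ _ _ (Fp p) x 1 nG) derive_cst.
by rewrite /Fp ifF //; apply/negbTE; rewrite -leNgt ltW.
Unshelve. all: by end_near.
Qed.

Lemma Fp_deriv p x : derivable (Fp p) x 1 /\ 'D_1 (Fp p) x = Fp (dq p) x.
Proof.
case: (ltrgtP x 0) => [x0|x0|->]; first exact: Fp_deriv_neg.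
  exact: Fp_deriv_pos.
by rewrite Fp0; exact: Fp_deriv0.
Qed.

Lemma Sm_Fp n p : Sm n setT (Fp p).
Proof.
elim: n p => [|n IH] p.
  split => // x _; apply/differentiable_continuous/derivable1_diffP.
  exact: (Fp_deriv p x).1.
split.
  move=> x _; apply/differentiable_continuous/derivable1_diffP.
  exact: (Fp_deriv p x).1.
split; first by move=> x v _; exact: (dirR v (Fp_deriv p x).1).1.
move=> v.
have -> : 'D_v (Fp p) = (fun x => v * Fp (dq p) x).
  apply: funext => x.
  by rewrite (dirR v (Fp_deriv p x).1).2 (Fp_deriv p x).2.
by apply: Sm_scal; [exact: openT|exact: IH].
Qed.

Lemma Fp1_pos x : 0 < x -> 0 < Fp 1 x.
Proof. by move=> x0; rewrite /Fp ifT // hornerC mul1r expR_gt0. Qed.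

Lemma Fp1_npos x : x <= 0 -> Fp 1 x = 0.
Proof. by move=> x0; rewrite /Fp ifF //; apply/negbTE; rewrite -leNgt. Qed.

End Flat.

Section Poly.
Variable R : realType.
Variable d : nat.

Lemma hom_scale deg (g : 'rV[R]_d -> R) (c : R) w : hom_poly deg g ->
  g (c *: w) = c ^+ deg * g w.
Proof.
move=> [cf Hc]; rewrite !Hc mulr_sumr; apply: eq_bigr => al /eqP Hal.
rewrite (eq_bigr (fun i => c ^+ al i * w ord0 i ^+ al i)); last first.
  by move=> i _; rewrite mxE exprMn.
rewrite big_split /= prodrXr Hal.
by rewrite mulrCA.
Qed.

Lemma Sm_hom (V : normedModType R) n deg (g : 'rV[R]_d -> R) (W : V -> 'rV[R]_d) :
  hom_poly deg g -> (forall i, Sm n setT (fun x => W x ord0 i)) ->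
  Sm n setT (fun x => g (W x)).
Proof.
move=> [cf Hc] HW.
have -> : (fun x => g (W x)) = (fun x => \sum_(al : {ffun 'I_d -> 'I_deg.+1} |
                          (\sum_(i < d) (al i : nat) == deg)%N)
                      cf al * \prod_(i < d) W x ord0 i ^+ al i).
  by apply: funext => x; rewrite Hc.
apply: Sm_sum; first exact: openT.
move=> al _; apply: Sm_scal; first exact: openT.
apply: Sm_prod; first exact: openT.
by move=> i _; apply: Sm_expf; [exact: openT|exact: HW].
Qed.

End Poly.

Section Coords.
Variable R : realType.
Variable d : nat.
Notation P := (R * 'rV[R]_d)%type.

Lemma Sm_fst n : Sm n setT (fun p : P => p.1).
Proof.
apply: Sm_lin; first exact: openT.
  by move=> x; exact: cvg_fst.
by move=> a y z.
Qed.

Lemma Sm_coord n (i : 'I_d) : Sm n setT (fun p : P => p.2 ord0 i).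
Proof.
apply: Sm_lin; first exact: openT.
  move=> x; apply: (@continuous_comp _ _ _ snd (fun M : 'rV[R]_d => M ord0 i)).
    exact: cvg_snd.
  exact: coord_continuous.
by move=> a y z /=; rewrite !mxE.
Qed.

End Coords.

Section Main.
Variable R : realType.
Variables d l l' : nat.
Variable hs : nat -> 'rV[R]_d -> R.
Variable k : int.
Hypothesis Hhom : forall j, (j <= l')%N -> hom_poly (l - j) (hs j).
Hypothesis Hll : (l' <= l)%N.

Definition Nrm (e0 : R) (e' : 'rV[R]_d) := e0 ^+ 2 + \sum_(i < d) e' ord0 i ^+ 2.
Definition hfun (e0 : R) (e' : 'rV[R]_d) := \sum_(j < l'.+1) e0 ^+ j * hs j e'.
Definition rr : R := - (k%:~R) / 2.
Definition cc : R := 16^-1.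
Definition rho (N : R) := N + Fp 1 (cc - N).
Definition afun e0 e' := hfun e0 e' * rho (Nrm e0 e') `^ rr.
Definition Kfun (t A : R) (w : 'rV[R]_d) :=
  (\sum_(j < l'.+1) t ^+ (l' - j) * A ^+ j * hs j w) *
  (A ^+ 2 + t ^+ 2 * \sum_(i < d) w ord0 i ^+ 2) `^ rr.
Definition mH : int := (l'%:Z + l%:Z - 2 * k)%R.

Lemma Nrm_ge0 e0 e' : 0 <= Nrm e0 e'.
Proof. by apply: addr_ge0; [exact: sqr_ge0|apply: sumr_ge0 => i _; exact: sqr_ge0]. Qed.

Lemma rho_id N : cc <= N -> rho N = N.
Proof. by move=> HN; rewrite /rho Fp1_npos ?addr0 //; lra. Qed.

Lemma rho_pos N : 0 <= N -> 0 < rho N.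
Proof.
move=> N0; rewrite /rho; case: (lerP cc N) => HN.
  rewrite Fp1_npos ?addr0; rewrite /cc in HN *; lra.
have H1 : 0 < cc - N by lra.
have := Fp1_pos H1; lra.
Qed.

Lemma Nrm_scale (mu lam A : R) w :
  Nrm (mu * A) (lam *: w) = mu ^+ 2 * A ^+ 2 + lam ^+ 2 * \sum_(i < d) w ord0 i ^+ 2.
Proof.
rewrite /Nrm exprMn mulr_sumr; congr (_ + _); apply: eq_bigr => i _.
by rewrite mxE exprMn.
Qed.

Lemma hfun_scale (mu lam A : R) w :
  hfun (mu * A) (lam *: w) =
  \sum_(j < l'.+1) (mu * A) ^+ j * (lam ^+ (l - j) * hs j w).
Proof.
rewrite /hfun; apply: eq_bigr => j _; congr (_ * _).
apply: hom_scale; apply: Hhom; exact: (ltn_ord j).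
Qed.


Lemma powC z t : 0 < z -> 0 < t ->
  z ^ (l%:Z - k) * t ^ mH * ((z * t ^+ 2) ^- 2) `^ rr = z ^+ l * t ^+ (l + l').
Proof.
move=> z0 t0.
have t20 : 0 <= t ^+ 2 by exact: sqr_ge0.
rewrite -powR_invn; last by apply: mulr_ge0; [exact: ltW|].
rewrite -powRrM.
have -> : (- 2%:R * rr) = k%:~R by rewrite /rr; field.
rewrite powRM ?(ltW z0) //.
rewrite -(powR_mulrn _ (ltW t0)) -powRrM.
rewrite -(powR_intmul _ (ltW z0)) -(powR_intmul _ (ltW t0)).
have hz r : (r == 0) ==> (z != 0) by rewrite (gt_eqF z0) implybT.
have ht r : (r == 0) ==> (t != 0) by rewrite (gt_eqF t0) implybT.
rewrite mulrACA -powRD; last exact: hz.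
rewrite -powRD; last exact: ht.
rewrite -(powR_mulrn _ (ltW z0)) -(powR_mulrn _ (ltW t0)).
congr (_ `^ _ * _ `^ _).
  by rewrite -intrD subrK.
rewrite /mH natrD.
ring.
Qed.


Lemma master z t A w : 0 < z -> 0 < t ->
  cc <= Nrm (A / (z * t ^+ 2)) ((z * t)^-1 *: w) ->
  z ^ (l%:Z - k) * t ^ mH * afun (A / (z * t ^+ 2)) ((z * t)^-1 *: w) = Kfun t A w.
Proof.
move=> z0 t0 HN.
have zn0 : z != 0 by rewrite gt_eqF.
have tn0 : t != 0 by rewrite gt_eqF.
set S := \sum_(i < d) w ord0 i ^+ 2.
set Q := A ^+ 2 + t ^+ 2 * S.
have S0 : 0 <= S by apply: sumr_ge0 => i _; exact: sqr_ge0.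
have Q0 : 0 <= Q.
  by apply: addr_ge0; [exact: sqr_ge0|apply: mulr_ge0 => //; exact: sqr_ge0].
have NE : Nrm (A / (z * t ^+ 2)) ((z * t)^-1 *: w) = (z * t ^+ 2) ^- 2 * Q.
  rewrite [A / _]mulrC Nrm_scale /Q /S; field.
  by rewrite zn0 tn0.
rewrite /afun rho_id // NE powRM; first last.
- exact: Q0.
- by rewrite invr_ge0; apply: exprn_ge0; apply: mulr_ge0; [exact: ltW|exact: sqr_ge0].
rewrite [A / _]mulrC hfun_scale /Kfun -/S -/Q.
set C1 := z ^ (l%:Z - k).
set C2 := t ^ mH.
set C3 := ((z * t ^+ 2) ^- 2) `^ rr.
set QQ := Q `^ rr.
set SS := \sum_(j < l'.+1) _.
have -> : C1 * C2 * (SS * (C3 * QQ)) = (C1 * C2 * C3) * SS * QQ by ring.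
rewrite /C1 /C2 /C3 powC //; congr (_ * _).
rewrite /SS mulr_sumr; apply: eq_bigr => [[j jl]] _ /=.
have jl' : (j <= l')%N by [].
have jl2 : (j <= l)%N by apply: leq_trans Hll.
set a := (l - j)%N; set b := (l' - j)%N.
have El : l = (j + a)%N by rewrite /a subnKC.
have El' : l' = (j + b)%N by rewrite /b subnKC.
rewrite El El' !exprD !exprMn !exprVn !exprMn.
field.
by rewrite !expf_neq0.
Qed.

End Main.


Section Smooth2.
Variable R : realType.
Variables d l l' : nat.
Variable hs : nat -> 'rV[R]_d -> R.
Variable k : int.
Hypothesis Hhom : forall j, (j <= l')%N -> hom_poly (l - j) (hs j).
Hypothesis Hll : (l' <= l)%N.

Lemma Sm_sq (V : normedModType R) n (Wf : V -> 'rV[R]_d) :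
  (forall i, Sm n setT (fun x => Wf x ord0 i)) ->
  Sm n setT (fun x => \sum_(i < d) Wf x ord0 i ^+ 2).
Proof.
move=> HW; apply: Sm_sum; first exact: openT.
by move=> i _; apply: Sm_expf; [exact: openT|exact: HW].
Qed.

Lemma Sm_hsum (V : normedModType R) n (T Af : V -> R) (Wf : V -> 'rV[R]_d) :
  Sm n setT T -> Sm n setT Af -> (forall i, Sm n setT (fun x => Wf x ord0 i)) ->
  Sm n setT (fun x => \sum_(j < l'.+1) T x ^+ (l' - j) * Af x ^+ j * hs j (Wf x)).
Proof.
move=> ST SA SW; apply: Sm_sum; first exact: openT.
move=> j _; apply: Sm_mulf; first exact: openT.
  apply: Sm_mulf; first exact: openT.
    by apply: Sm_expf; [exact: openT|].
  by apply: Sm_expf; [exact: openT|].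
apply: Sm_hom SW; apply: Hhom; exact: (ltn_ord j).
Qed.

Lemma Sm_K (V : normedModType R) n (T Af : V -> R) (Wf : V -> 'rV[R]_d) :
  Sm n setT T -> Sm n setT Af -> (forall i, Sm n setT (fun x => Wf x ord0 i)) ->
  (forall x, 0 < Af x ^+ 2 + T x ^+ 2 * \sum_(i < d) Wf x ord0 i ^+ 2) ->
  Sm n setT (fun x => Kfun l' hs k (T x) (Af x) (Wf x)).
Proof.
move=> ST SA SW pos; rewrite /Kfun.
apply: Sm_mulf; first exact: openT.
  exact: Sm_hsum.
have -> : (fun x => (Af x ^+ 2 + T x ^+ 2 * \sum_(i < d) Wf x ord0 i ^+ 2) `^ rr R k) =
   (fun y => y `^ rr R k) \o (fun x => Af x ^+ 2 + T x ^+ 2 * \sum_(i < d) Wf x ord0 i ^+ 2).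
  by [].
apply: (Sm_comp (W := Wpos (R:=R))); first exact: open_Wpos.
- exact: openT.
- exact: Sm_powR.
- apply: Sm_addf; first exact: openT.
    by apply: Sm_expf; [exact: openT|].
  apply: Sm_mulf; first exact: openT.
    by apply: Sm_expf; [exact: openT|].
  exact: Sm_sq.
- by move=> x _; exact: pos.
Qed.

Lemma Sm_afun (V : normedModType R) n (E0 : V -> R) (E : V -> 'rV[R]_d) :
  Sm n setT E0 -> (forall i, Sm n setT (fun x => E x ord0 i)) ->
  Sm n setT (fun x => afun l' hs k (E0 x) (E x)).
Proof.
move=> S0 SE; rewrite /afun.
have SN : Sm n setT (fun x => Nrm (E0 x) (E x)).
  rewrite /Nrm; apply: Sm_addf; first exact: openT.
    by apply: Sm_expf; [exact: openT|].
  exact: Sm_sq.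
apply: Sm_mulf; first exact: openT.
  rewrite /hfun; apply: Sm_sum; first exact: openT.
  move=> j _; apply: Sm_mulf; first exact: openT.
    by apply: Sm_expf; [exact: openT|].
  apply: Sm_hom SE; apply: Hhom; exact: (ltn_ord j).
have -> : (fun x => rho (Nrm (E0 x) (E x)) `^ rr R k) =
   (fun y => y `^ rr R k) \o (fun x => rho (Nrm (E0 x) (E x))).
  by [].
apply: (Sm_comp (W := Wpos (R:=R))); first exact: open_Wpos.
- exact: openT.
- exact: Sm_powR.
- rewrite /rho; apply: Sm_addf; first exact: openT.
    exact: SN.
  have -> : (fun x => Fp 1 (cc R - Nrm (E0 x) (E x))) =
            Fp 1 \o (fun x => cc R - Nrm (E0 x) (E x)) by [].
  apply: (Sm_comp (W := setT)); [exact: openT|exact: openT|exact: Sm_Fp| |by []].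
  apply: Sm_addf; first exact: openT.
    exact: Sm_cst.
  have -> : (fun x => - Nrm (E0 x) (E x)) = (fun x => (-1) * Nrm (E0 x) (E x)).
    by apply: funext => x; rewrite mulN1r.
  by apply: Sm_scal; [exact: openT|].
- by move=> x _; apply: rho_pos; exact: Nrm_ge0.
Qed.

End Smooth2.

Section Charts.
Variable R : realType.
Variables d l l' : nat.
Variable hs : nat -> 'rV[R]_d -> R.
Variable k : int.
Hypothesis Hhom : forall j, (j <= l')%N -> hom_poly (l - j) (hs j).
Hypothesis Hll : (l' <= l)%N.
Notation P := (R * 'rV[R]_d)%type.

Lemma Nrm_master z t A (w : 'rV[R]_d) : 0 < z -> 0 < t ->
  Nrm (A / (z * t ^+ 2)) ((z * t)^-1 *: w) =
  (z * t ^+ 2) ^- 2 * (A ^+ 2 + t ^+ 2 * \sum_(i < d) w ord0 i ^+ 2).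
Proof.
move=> z0 t0; have zn0 : z != 0 by rewrite gt_eqF.
have tn0 : t != 0 by rewrite gt_eqF.
rewrite [A / _]mulrC Nrm_scale; field.
by rewrite zn0 tn0.
Qed.

Lemma cc_bound y Q : 0 < y -> y < 4 -> 1 <= Q -> cc R <= y ^- 2 * Q.
Proof.
move=> y0 y4 Q1.
have y2 : y ^+ 2 < 16.
  have : y * y < 4 * 4 by apply: ltr_pM => //; exact: ltW.
  by rewrite expr2; lra.
have H : 16^-1 <= (y ^+ 2)^-1.
  rewrite lef_pV2 ?posrE; [exact: ltW|lra|exact: exprn_gt0].
have H0 : 0 <= (y ^+ 2)^-1 by rewrite invr_ge0; exact: exprn_ge0 (ltW y0).
rewrite /cc; apply: le_trans H _.
have : (y ^+ 2)^-1 * 1 <= (y ^+ 2)^-1 * Q by apply: ler_wpM2l.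
by rewrite mulr1.
Qed.

Lemma sgn_sq (s : bool) : sgn R s ^+ 2 = 1.
Proof. by rewrite /sgn sqrr_sign. Qed.

Lemma sumsq_setj (u : 'rV[R]_d) (j : 'I_d) (s : bool) :
  1 <= \sum_(i < d) (sgn R s *: setj u j 1) ord0 i ^+ 2.
Proof.
rewrite (bigD1 j) //= !mxE eqxx mulr1 sgn_sq.
have : 0 <= \sum_(i < d | i != j) (sgn R s *: setj u j 1) ord0 i ^+ 2.
  by apply: sumr_ge0 => i _; exact: sqr_ge0.
lra.
Qed.

Lemma Sm_setj n (j : 'I_d) (s : bool) (i : 'I_d) :
  Sm n setT (fun p : P => (sgn R s *: setj p.2 j 1) ord0 i).
Proof.
have -> : (fun p : P => (sgn R s *: setj p.2 j 1) ord0 i) =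
   (fun p : P => sgn R s * (if i == j then 1 else p.2 ord0 i)).
  by apply: funext => p; rewrite !mxE.
apply: Sm_scal; first exact: openT.
case: (i == j); [exact: Sm_cst|exact: Sm_coord].
Qed.


Lemma eH_ok : eH_symbol (l%:Z - k) (mH l l' k) (mH l l' k) (afun l' hs k).
Proof.
rewrite /eH_symbol /=.
have mas := master k Hhom Hll.
split; [|split; [|split]].
- apply: Sm_smooth; first exact: openT.
  move=> n; apply: Sm_afun; [exact: Hhom|exact: (Sm_fst R d n)|exact: Sm_coord].
- move=> j s; exists setT; split => //.
  exists (fun p : P => Kfun l' hs k 1 (sgn R s * p.2 ord0 j) (sgn R s *: setj p.2 j 1)).
  split.
    apply: Sm_smooth; first exact: openT.
    move=> n; apply: Sm_K; first exact: Hhom.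
    + exact: Sm_cst.
    + by apply: Sm_scal; [exact: openT|exact: Sm_coord].
    + exact: Sm_setj.
    + move=> p; have := sumsq_setj p.2 j s.
      have := sqr_ge0 (sgn R s * p.2 ord0 j); rewrite expr1n mul1r; lra.
  move=> p [/andP[x0 x1] _] xp /=.
  have S1 := sumsq_setj p.2 j s.
  set A := sgn R s * p.2 ord0 j.
  set w := sgn R s *: setj p.2 j 1.
  have A2 := sqr_ge0 A.
  have HN : cc R <= Nrm (A / (p.1 * 1 ^+ 2)) ((p.1 * 1)^-1 *: w).
    rewrite Nrm_master //; apply: cc_bound; rewrite ?expr1n ?mulr1 //.
      by apply: lt_trans x1 _; lra.
    rewrite mul1r; lra.
  have := mas p.1 1 A w xp ltr01 HN.
  rewrite expr1n !mulr1 exp1rz mulr1 => <-.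
  by rewrite /A /w scalerA [_^-1 * _]mulrC.
- move=> e; rewrite if_same; exists setT; split => //.
  exists (fun p : P => Kfun l' hs k p.1 (sgn R e) p.2).
  split.
    apply: Sm_smooth; first exact: openT.
    move=> n; apply: Sm_K; first exact: Hhom.
    + exact: Sm_fst.
    + exact: Sm_cst.
    + exact: Sm_coord.
    + move=> p; rewrite sgn_sq.
      have : 0 <= p.1 ^+ 2 * \sum_(i < d) p.2 ord0 i ^+ 2.
        by apply: mulr_ge0; [exact: sqr_ge0|apply: sumr_ge0 => i _; exact: sqr_ge0].
      lra.
  move=> p [/andP[x0 x1] _] xp /=.
  have S0 : 0 <= p.1 ^+ 2 * \sum_(i < d) p.2 ord0 i ^+ 2.
    by apply: mulr_ge0; [exact: sqr_ge0|apply: sumr_ge0 => i _; exact: sqr_ge0].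
  have HN : cc R <= Nrm (sgn R e / (1 * p.1 ^+ 2)) ((1 * p.1)^-1 *: p.2).
    rewrite Nrm_master //; apply: cc_bound; rewrite ?mul1r.
    + exact: exprn_gt0.
    + have : p.1 * p.1 < 1 * 1 by apply: ltr_pM.
      rewrite expr2; lra.
    + rewrite sgn_sq; lra.
  have := mas 1 p.1 (sgn R e) p.2 ltr01 xp HN.
  by rewrite exp1rz !mul1r => <-.
- move=> e j s; rewrite if_same; exists setT; split => //.
  exists (fun p : P => Kfun l' hs k p.1 (sgn R e) (sgn R s *: setj p.2 j 1)).
  split.
    apply: Sm_smooth; first exact: openT.
    move=> n; apply: Sm_K; first exact: Hhom.
    + exact: Sm_fst.
    + exact: Sm_cst.
    + exact: Sm_setj.
    + move=> p; rewrite sgn_sq.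
      have : 0 <= p.1 ^+ 2 * \sum_(i < d) (sgn R s *: setj p.2 j 1) ord0 i ^+ 2.
        by apply: mulr_ge0; [exact: sqr_ge0|apply: sumr_ge0 => i _; exact: sqr_ge0].
      lra.
  move=> p [/andP[t0 t2] [/andP[z0 z1] _]] [tp zp] /=.
  set w := sgn R s *: setj p.2 j 1.
  have S0 : 0 <= p.1 ^+ 2 * \sum_(i < d) w ord0 i ^+ 2.
    by apply: mulr_ge0; [exact: sqr_ge0|apply: sumr_ge0 => i _; exact: sqr_ge0].
  have HN : cc R <= Nrm (sgn R e / (p.2 ord0 j * p.1 ^+ 2)) ((p.2 ord0 j * p.1)^-1 *: w).
    rewrite Nrm_master //; apply: cc_bound.
    + by apply: mulr_gt0 => //; exact: exprn_gt0.
    + have h1 : p.1 * p.1 < 2 * 2 by apply: ltr_pM.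
      have h2 : p.1 ^+ 2 < 4 by rewrite expr2; lra.
      have : p.2 ord0 j * (p.1 ^+ 2) < 1 * 4.
        by apply: ltr_pM => //; exact: exprn_ge0.
      lra.
    + rewrite sgn_sq; lra.
  have := mas (p.2 ord0 j) p.1 (sgn R e) w zp tp HN.
  by rewrite /w scalerA [_^-1 * _]mulrC => <-.
Qed.

End Charts.

Section Psym.
Variable R : realType.
Variables d l l' : nat.
Variable hs : nat -> 'rV[R]_d -> R.
Variable k : int.
Hypothesis Hhom : forall j, (j <= l')%N -> hom_poly (l - j) (hs j).
Hypothesis Hll : (l' <= l)%N.

Lemma inv_cvg0 : (fun lam : R => lam^-1) @ +oo --> (0 : R).
Proof.
apply/cvgr0Pnorm_lt => e e0.
exists e^-1; split; first exact: num_real.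
move=> x Hx.
have x0 : 0 < x by apply: lt_trans Hx; rewrite invr_gt0.
rewrite normfV gtr0_norm //.
by rewrite -[e]invrK ltf_pV2 ?posrE ?invr_gt0.
Qed.

Lemma K_cont (e0 : R) (e' : 'rV[R]_d) : e0 != 0 ->
  {for 0, continuous (fun s : R => Kfun l' hs k s e0 e')}.
Proof.
move=> e0n.
have e02 : 0 < e0 ^+ 2 by rewrite exprn_even_gt0.
have S : Sm 0 (setT : set R) (fun s : R => Kfun l' hs k s e0 e').
  apply: (@Sm_K R d l l' hs k Hhom R 0 id (fun _ => e0) (fun _ => e')).
  - apply: Sm_lin; [exact: openT| by move=> x; exact: cvg_id | by []].
  - exact: Sm_cst.
  - by move=> i; exact: Sm_cst.
  - move=> x; have : 0 <= x ^+ 2 * \sum_(i < d) e' ord0 i ^+ 2.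
      by apply: mulr_ge0; [exact: sqr_ge0|apply: sumr_ge0 => i _; exact: sqr_ge0].
    lra.
by apply: (Sm_cont S).
Qed.


Lemma psym_lim (e0 : R) (e' : 'rV[R]_d) : e0 != 0 ->
  (fun lam : R => lam ^ (- mH l l' k) * afun l' hs k (lam ^+ 2 * e0) (lam *: e'))
    @ +oo --> Kfun l' hs k 0 e0 e'.
Proof.
move=> e0n.
have e0p : 0 < `|e0| by rewrite normr_gt0.
have L : ((fun s => Kfun l' hs k s e0 e') \o (fun lam : R => lam^-1)) @ +oo
           --> Kfun l' hs k 0 e0 e'.
  apply: cvg_comp inv_cvg0 _; exact: K_cont.
apply: cvg_trans L; apply: near_eq_cvg.
exists (1 + `|e0|^-1); split; first exact: num_real.
move=> lam Hlam /=.
have ie0 : 0 < `|e0|^-1 by rewrite invr_gt0.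
have lam1 : 1 < lam by lra.
have lam0 : 0 < lam by lra.
have q1 : 1 <= lam * `|e0|.
  have : `|e0|^-1 * `|e0| < lam * `|e0| by rewrite ltr_pM2r //; lra.
  rewrite mulVf ?gt_eqF //; lra.
have E1 : e0 / (1 * lam^-1 ^+ 2) = lam ^+ 2 * e0.
  by rewrite mul1r exprVn invrK mulrC.
have E2 : (1 * lam^-1)^-1 = lam by rewrite mul1r invrK.
have HN : cc R <= Nrm (e0 / (1 * lam^-1 ^+ 2)) ((1 * lam^-1)^-1 *: e').
  rewrite E1 E2 Nrm_scale.
  have S0 : 0 <= lam ^+ 2 * \sum_(i < d) e' ord0 i ^+ 2.
    by apply: mulr_ge0; [exact: sqr_ge0|apply: sumr_ge0 => i _; exact: sqr_ge0].
  have q2 : 1 <= (lam * `|e0|) ^+ 2 by apply: exprn_ege1.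
  have l2 : 1 <= lam ^+ 2 by apply: exprn_ege1; lra.
  have E : (lam ^+ 2) ^+ 2 * e0 ^+ 2 = (lam * `|e0|) ^+ 2 * lam ^+ 2.
    have n2 : `|e0| ^+ 2 = e0 ^+ 2 by rewrite -normrX ger0_norm // sqr_ge0.
    by rewrite [(lam * _) ^+ 2]exprMn n2; ring.
  have : 1 <= (lam * `|e0|) ^+ 2 * lam ^+ 2.
    by rewrite -[1]mulr1; apply: ler_pM.
  rewrite /cc; lra.
have lamI : 0 < lam^-1 by rewrite invr_gt0.
have := master k Hhom Hll ltr01 lamI HN.
rewrite exp1rz mul1r E1 E2 => <-.
by rewrite -expfV invr_expz.
Qed.


Lemma K0 (e0 : R) (e' : 'rV[R]_d) :
  Kfun l' hs k 0 e0 e' = e0 ^+ l' * hs l' e' * (e0 ^+ 2) `^ rr R k.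
Proof.
rewrite /Kfun big_ord_recr /= subnn expr0 mul1r expr0n mul0r addr0.
rewrite big1 ?add0r // => i _.
by rewrite expr0n subn_eq0 leqNgt ltn_ord /= !mul0r.
Qed.

Lemma pos_val (x : R) : 0 < x -> x ^+ l' * (x ^+ 2) `^ rr R k = x ^ (l'%:Z - k).
Proof.
move=> x0.
rewrite -[x ^+ 2](powR_mulrn _ (ltW x0)) -powRrM.
have -> : 2%:R * rr R k = (- k)%:~R by rewrite /rr intrN; field.
rewrite powR_intmul ?(ltW x0) // expfzDr ?gt_eqF //.
Qed.

End Psym.

Lemma final_part1 (R : realType) d l' (hs : nat -> 'rV[R]_d -> R) (k : int) e0 e' :
  1 <= eucl e0 e' ->
  afun l' hs k e0 e' = (\sum_(j < l'.+1) e0 ^+ j * hs j e') * eucl e0 e' ^ (- k).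
Proof.
move=> H1; rewrite /afun /hfun; congr (_ * _).
have N0 := Nrm_ge0 e0 e'.
have -> : eucl e0 e' = Num.sqrt (Nrm e0 e') by [].
have N1 : 1 <= Nrm e0 e'.
  have := ler_pM ler01 ler01 H1 H1.
  by rewrite mulr1 -expr2 sqr_sqrtr.
rewrite rho_id; last by rewrite /cc; apply: le_trans N1; lra.
rewrite -powR12_sqrt // -powR_intmul; last exact: powR_ge0.
by rewrite -powRrM /rr; congr (_ `^ _); rewrite intrN; field.
Qed.

Unset Implicit Arguments.
Local Open Scope ring_scope.

Theorem proposition3 (R : realType) (n l l' : nat)
    (hs : nat -> 'rV[R]_(n.-1).*2 -> R) :
  (0 < n)%N -> (l' <= l)%N ->
  (forall j : nat, (j <= l')%N -> hom_poly (l - j) (hs j)) ->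
  hs l' <> (fun _ => 0) ->
  forall k : int,
    let h := fun (e0 : R) (e' : 'rV[R]_(n.-1).*2) =>
               \sum_(j < l'.+1) e0 ^+ j * hs j e' in
    let mH := (l'%:Z + l%:Z - 2 * k)%R in
    exists a : R -> 'rV[R]_(n.-1).*2 -> R,
      (forall e0 e', 1 <= eucl e0 e' -> a e0 e' = h e0 e' * eucl e0 e' ^ (- k)) /\
      eH_symbol (l%:Z - k) mH mH a /\
      heis_psym false mH a (fun e0 e' => e0 ^ (l'%:Z - k) * hs l' e') /\
      heis_psym true mH a
        (fun e0 e' => (-1) ^+ l' * `|e0| ^ (l'%:Z - k) * hs l' e').
Proof.
move=> n0 Hll Hhom _ k h mH0.
exists (afun l' hs k).
split; [|split; [|split]].
- by move=> e0 e' H1; rewrite final_part1.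
- exact: (eH_ok k Hhom Hll).
- move=> e0 e' /=; rewrite /sgn expr0 mul1r => e00.
  have := @psym_lim _ _ _ _ _ k Hhom Hll e0 e' (lt0r_neq0 e00).
  by rewrite K0 -mulrA [hs l' e' * _]mulrC mulrA pos_val.
- move=> e0 e' /=; rewrite /sgn expr1 mulN1r oppr_gt0 => e00.
  have := @psym_lim _ _ _ _ _ k Hhom Hll e0 e' (ltr0_neq0 e00).
  rewrite K0.
  have x0 : 0 < `|e0| by rewrite normr_gt0 ltr0_neq0.
  have Ex : e0 = - `|e0| by rewrite ltr0_norm ?opprK.
  have V : e0 ^+ l' * hs l' e' * (e0 ^+ 2) `^ rr R k =
            (-1) ^+ l' * `|e0| ^ (l'%:Z - k) * hs l' e'.
    rewrite -(pos_val l' k x0).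
    have -> : e0 ^+ l' = (-1) ^+ l' * `|e0| ^+ l'.
      rewrite {1}Ex.
      exact: exprNn.
    have -> : e0 ^+ 2 = `|e0| ^+ 2 by rewrite {1}Ex sqrrN.
    ring.
  by rewrite V.
Qed.
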